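(* Let $(\bar F,\bar\Delta,\bar\nu)$ be a probability preserving dynamical system with transfer operator $\mathcal L$, let $\bar\phi:\bar\Delta\to\mathbb R$ be measurable and set $\mathcal L_{is}h:=\mathcal L(e^{is\bar\phi}h)$ for $s\in\mathbb R$. Let $\mathcal B_1\hookrightarrow\mathcal B_2\hookrightarrow L^1(\bar\nu)$ be complex Banach spaces with $\mathbf 1_{\bar\Delta}\in\mathcal B_1$ on which the operators $\mathcal L_{is}^n$ act, and assume there exist constants $\alpha_1\in(0,1]$, $K,C,\alpha>0$ and an integer $n_0$ such that $$\forall n\ge n_0,\ \forall |s|>K:\qquad \|\mathcal L^n_{is}\|_{\mathcal B_1\to\mathcal B_2}\le C|s|^\alpha e^{-Cn^{\alpha_1}}.$$ Then: (i) there exist $K'>0$, $C'>0$, $\alpha'\ge0$, $\alpha_1'\in(0,1]$, $\hat\delta>0$ and $n_1$ such that for every $|s|>K'$ and every $n\ge n_1$, $\|\mathcal L^n_{is}\|_{\mathcal B_1\to\mathcal B_2}\le C'|s|^{\alpha'}e^{-n^{\alpha_1'}\hat\delta|s|^{-\alpha'}}$; (ii) for every $r\ge0$, every $d_1\in[0,1]$ and every $B>0$ there exists $K''>0$ such that $\displaystyle\int_{K''<|s|<Bn^{(r-1)/2}}\frac{\|\mathcal L^n_{is}\|_{\mathcal B_1\to\mathcal B_2}}{|s|^{d_1}}\,ds=o(n^{-r/2})$ as $n\to\infty$.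
   Context: The transfer operator $\mathcal L$ of $(\bar F,\bar\Delta,\bar\nu)$ is the operator on $L^1(\bar\nu)$ characterized by $\mathbb E_{\bar\nu}(g\cdot h\circ\bar F)=\mathbb E_{\bar\nu}(h\,\mathcal L g)$ for all $g\in L^1$, $h\in L^\infty$. $\hookrightarrow$ denotes continuous embedding. $\|\cdot\|_{\mathcal B_1\to\mathcal B_2}$ is the operator norm from $\mathcal B_1$ to $\mathcal B_2$. *)

(* Defs.v *)
From HB Require Import structures.
From mathcomp Require Import all_boot all_order all_algebra.
From mathcomp Require Import all_classical all_reals all_analysis.
From mathcomp Require Import complex.
Set Implicit Arguments.
Unset Strict Implicit.
Unset Printing Implicit Defensive.
Import Order.TTheory GRing.Theory Num.Theory.
Local Open Scope classical_set_scope.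
Local Open Scope ring_scope.

Section Defs.
Context {d : measure_display} {T : measurableType d} {R : realType}.
Implicit Types (mu : {measure set T -> \bar R}) (f g h : T -> R[i]).

Definition cRe f : T -> R := fun x => complex.Re (f x).
Definition cIm f : T -> R := fun x => complex.Im (f x).

Definition cmeasurable f :=
  measurable_fun setT (cRe f) /\ measurable_fun setT (cIm f).

Definition cintegrable mu f :=
  mu.-integrable setT (fun x => (cRe f x)%:E) /\
  mu.-integrable setT (fun x => (cIm f x)%:E).

Definition cexpect mu f : R[i] :=
  (Rintegral mu setT (cRe f) +i* Rintegral mu setT (cIm f))%C.

Definition cL1norm mu f : R := Rintegral mu setT (fun x => Normc.normc (f x)).

Definition cLinfty f := cmeasurable f /\ exists M : R, forall x, Normc.normc (f x) <= M.

Definition measure_preserving mu (F : T -> T) :=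
  measurable_fun setT F /\
  forall A, measurable A -> mu (F @^-1` A) = mu A.

(** L is the transfer operator of (F, T, mu):
    for g in L^1, L g in L^1 and E(g * h o F) = E(h * L g) for all h in L^infty.
    (L is a map on representatives; it is determined only mu-a.e.) *)
Definition is_transfer_operator mu (F : T -> T)
    (L : (T -> R[i]) -> (T -> R[i])) :=
  forall g, cintegrable mu g ->
    cintegrable mu (L g) /\
    forall h, cLinfty h ->
      cexpect mu (fun x => g x * h (F x)) = cexpect mu (fun x => h x * L g x).

Definition expi (t : R) : R[i] := (cos t +i* sin t)%C.

Definition Lis (L : (T -> R[i]) -> (T -> R[i])) (phi : T -> R) (s : R)
    (h : T -> R[i]) : T -> R[i] :=
  L (fun x => expi (s * phi x) * h x).

Definition vnorm {V : normedModType R[i]} (v : V) : R := complex.Re `|v|.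

(** (V, iota) is a complex Banach space continuously embedded in L^1(mu):
    iota : V -> (T -> C) picks representatives, is linear mod a.e.,
    injective mod a.e., lands in L^1 and is bounded. *)
Definition embedded_in_L1 mu {V : completeNormedModType R[i]}
    (iota : V -> T -> R[i]) :=
  [/\ forall v, cintegrable mu (iota v),
      forall (a : R[i]) (v w : V),
        ae_eq mu setT (iota (a *: v + w)) (fun x => a * iota v x + iota w x),
      forall v, ae_eq mu setT (iota v) (fun=> 0) -> v = 0 &
      exists c : R, forall v, cL1norm mu (iota v) <= c * vnorm v].

Definition cont_embedding mu {V1 V2 : completeNormedModType R[i]}
    (iota1 : V1 -> T -> R[i]) (iota2 : V2 -> T -> R[i]) :=
  exists (j : V1 -> V2) (c : R),
    (forall v, ae_eq mu setT (iota2 (j v)) (iota1 v)) /\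
    (forall v, vnorm (j v) <= c * vnorm v).

Definition acts_on mu {V : completeNormedModType R[i]}
    (iota : V -> T -> R[i]) (Op : (T -> R[i]) -> (T -> R[i])) :=
  forall v : V, exists w : V, ae_eq mu setT (iota w) (Op (iota v)).

Definition opnorm mu {V1 V2 : completeNormedModType R[i]}
    (iota1 : V1 -> T -> R[i]) (iota2 : V2 -> T -> R[i])
    (Op : (T -> R[i]) -> (T -> R[i])) : \bar R :=
  ereal_sup [set (vnorm w)%:E | w in
    [set w : V2 | exists v : V1,
       vnorm v <= 1 /\ ae_eq mu setT (iota2 w) (Op (iota1 v))]].

End Defs.

(* Main.v *)
Require Import Defs.
From HB Require Import structures.
From mathcomp Require Import all_boot all_order all_algebra.
From mathcomp Require Import all_classical all_reals all_analysis.
From mathcomp Require Import complex.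
From mathcomp Require Import ring lra.
Import Order.TTheory GRing.Theory Num.Theory.
Local Open Scope classical_set_scope.
Local Open Scope ring_scope.

Section aux.
Local Open Scope ereal_scope.
Lemma le_integral_nm d (T : measurableType d) (R : realType)
  (mu : {measure set T -> \bar R}) (f g : T -> \bar R) :
  (forall x, 0 <= g x) -> (forall x, f x <= g x) ->
  \int[mu]_x f x <= \int[mu]_x g x.
Proof.
move=> g0 fg.
rewrite (integralE _ _ f).
apply: (@le_trans _ _ (\int[mu]_x f^\+ x)).
  apply: geeDl; rewrite oppe_le0; apply: integral_ge0 => x _; exact: funeneg_ge0.
rewrite ge0_integralE; last by move=> x _; exact: funepos_ge0.
rewrite ge0_integralE; last by move=> x _; exact: g0.
apply: ereal_sup_le => _ [h /= hf <-]; exists h => //= x.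
apply: (le_trans (hf x)); rewrite /patch /=; case: ifP => // _.
by rewrite funeposE ge_max fg g0.
Qed.

End aux.

Lemma key (R : realType) (C a1 p K0 eps : R) : 0 < C -> 0 < a1 -> 0 < eps ->
  \forall n \near \oo, K0 * n%:R `^ p * expR (- C * n%:R `^ a1) <= eps.
Proof.
move=> C0 a0 e0.
have [K0le|K0gt] := lerP K0 0.
  near=> n; apply: (le_trans _ (ltW e0)).
  by rewrite -mulrA mulr_le0_ge0 // mulr_ge0 // ?powR_ge0 ?expR_ge0.
set m := (Num.truncn (Num.max (p / a1) 0)).+1.
have hm : p <= a1 * m%:R.
  have := truncnS_gt (Num.max (p / a1) 0); rewrite -/m => h.
  rewrite -ler_pdivrMl //; apply: ltW; apply: le_lt_trans h.
  by rewrite mulrC le_max lexx.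
set f := (m.+1)`!%:R : R.
have f0 : 0 < f by rewrite ltr0n fact_gt0.
set Cm := C ^+ m.+1.
have Cm0 : 0 < Cm by rewrite exprn_gt0.
set Q := K0 * f / (eps * Cm).
have Q0 : 0 <= Q by apply: divr_ge0; apply: mulr_ge0; apply: ltW.
set N := (Num.truncn (Q `^ a1^-1)).+1.
near=> n.
have hN : (N <= n)%N by near: n; exact: nbhs_infty_ge.
have n1 : 1 <= n%:R :> R by rewrite ler1n (leq_trans _ hN).
have n0 : 0 < n%:R :> R by apply: lt_le_trans n1.
set y := n%:R `^ a1.
have y0 : 0 < y by rewrite powR_gt0.
have hQ : Q <= y.
  have h1 : Q `^ a1^-1 <= n%:R.
    apply: ltW; apply: (lt_le_trans (truncnS_gt _)); rewrite ler_nat //.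
  have := ge0_ler_powR (ltW a0) _ _ h1.
  rewrite -powRrM mulVf ?gt_eqF // powRr1 //; apply => //; rewrite ?nnegrE ?powR_ge0 ?ltW //.
have hp : n%:R `^ p <= y ^+ m.
  rewrite -powR_mulrn ?powR_ge0 // -powRrM; exact: ler_powR.
have hE : expR (- C * y) <= ((C * y) ^+ m.+1 / f)^-1.
  rewrite mulNr expRN lef_pV2 ?posrE ?expR_gt0 ?divr_gt0 ?exprn_gt0 ?mulr_gt0 //.
  apply: le_trans (expR_ge1Dxn m (ltW (mulr_gt0 C0 y0))); lra.
apply: (le_trans (ler_wpM2r (expR_ge0 _) (ler_wpM2l (ltW K0gt) hp))).
apply: (le_trans (ler_wpM2l (mulr_ge0 (ltW K0gt) (exprn_ge0 m (ltW y0))) hE)).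
rewrite invf_div exprMn -/Cm mulrA ler_pdivrMr; last exact: mulr_gt0 Cm0 (exprn_gt0 _ y0).
move: hQ; rewrite /Q ler_pdivrMr; last exact: mulr_gt0 e0 Cm0. move=> hQ.
have H := ler_wpM2r (exprn_ge0 m (ltW y0)) hQ.
rewrite exprSr.
rewrite [leLHS](_ : _ = K0 * f * y ^+ m); last by ring.
by rewrite [leRHS](_ : _ = y * (eps * Cm) * y ^+ m); last by ring.
Unshelve. all: by end_near.
Qed.

Theorem lemma4p7 (d : measure_display) (T : measurableType d) (R : realType)
  (nu : probability T R) (F : T -> T) (L : (T -> R[i]) -> (T -> R[i]))
  (phi : T -> R)
  (V1 V2 : completeNormedModType R[i])
  (iota1 : V1 -> T -> R[i]) (iota2 : V2 -> T -> R[i]) :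
  measure_preserving nu F ->
  is_transfer_operator nu F L ->
  measurable_fun setT phi ->
  embedded_in_L1 nu iota1 ->
  embedded_in_L1 nu iota2 ->
  cont_embedding nu iota1 iota2 ->
  (exists v1 : V1, ae_eq nu setT (iota1 v1) (fun=> 1)) ->
  (forall s : R, acts_on nu iota1 (Lis L phi s)) ->
  (forall s : R, acts_on nu iota2 (Lis L phi s)) ->
  (exists (alpha1 K C alpha : R) (n0 : nat),
     [/\ 0 < alpha1 <= 1, 0 < K, 0 < C, 0 < alpha &
      forall n : nat, (n0 <= n)%N -> forall s : R, K < `|s| ->
        (opnorm nu iota1 iota2 (iter n (Lis L phi s)) <=
         (C * `|s| `^ alpha * expR (- C * n%:R `^ alpha1))%:E)%E]) ->
  (* (i) *)
  (exists (K' C' alpha' alpha1' dhat : R) (n1 : nat),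
     [/\ 0 < K', 0 < C', 0 <= alpha', 0 < alpha1' <= 1 /\ 0 < dhat &
      forall s : R, K' < `|s| -> forall n : nat, (n1 <= n)%N ->
        (opnorm nu iota1 iota2 (iter n (Lis L phi s)) <=
         (C' * `|s| `^ alpha' *
          expR (- (n%:R `^ alpha1' * dhat * `|s| `^ (- alpha'))))%:E)%E])
  /\
  (* (ii) *)
  (forall (r d1 B : R), 0 <= r -> 0 <= d1 <= 1 -> 0 < B ->
     exists K'' : R, 0 < K'' /\
       forall eps : R, 0 < eps ->
         \forall n \near \oo,
           (\int[@lebesgue_measure R]_(s in
               [set s : R | (K'' < `|s| < B * n%:R `^ ((r - 1) / 2))%R])
              (opnorm nu iota1 iota2 (iter n (Lis L phi s)) *
               ((`|s| `^ d1)^-1)%R%:E)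
            <= (eps * n%:R `^ (- (r / 2)))%R%:E)%E).
Proof.
move=> _ _ _ _ _ _ _ _ _ [a1 [K [C [al [n0 [/andP[a10 a11] K0 C0 al0 H]]]]]].
split.
  exists (K + 1), C, al, a1, C, n0; split => //.
  - by apply: (lt_trans K0); rewrite ltrDl.
  - exact: ltW.
  - by split => //; apply/andP.
  move=> s Ks n nn0.
  have Ks' : K < `|s| by apply: le_lt_trans Ks; rewrite lerDl.
  apply: (le_trans (H n nn0 s Ks')); rewrite lee_fin.
  apply: ler_wpM2l; first by rewrite mulr_ge0 ?powR_ge0 ?ltW.
  rewrite ler_expR.
  have s1 : 1 <= `|s| by apply: ltW; apply: le_lt_trans Ks; rewrite lerDr ltW.
  have q1 : `|s| `^ (- al) <= 1.
    rewrite powRN invf_le1; last by rewrite powR_gt0 // (lt_le_trans ltr01).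
    by rewrite -(powRr0 `|s|) ler_powR // ltW.
  have q0 : 0 <= `|s| `^ (- al) by rewrite powR_ge0.
  have P0 : 0 <= n%:R `^ a1 by rewrite powR_ge0.
  have q1' : 0 <= 1 - `|s| `^ (- al) by rewrite subr_ge0.
  have h := mulr_ge0 (mulr_ge0 (ltW C0) P0) q1'.
  nra.
move=> r d1 B r0 /andP[d10 d11] B0.
exists (K + 1); split; first by apply: (lt_trans K0); rewrite ltrDl.
move=> eps e0.
set a := (r - 1) / 2.
have KK := @key R C a1 (a * al + a + r / 2) (2 * C * B `^ al * B) eps C0 a10 e0.
near=> n.
have hn0 : (n0 <= n)%N by near: n; exact: nbhs_infty_ge.
have hn1 : (1 <= n)%N by near: n; exact: nbhs_infty_ge.
have kk : 2 * C * B `^ al * B * n%:R `^ (a * al + a + r / 2) *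
          expR (- C * n%:R `^ a1) <= eps by near: n; exact: KK.
have nR0 : 0 < n%:R :> R by rewrite ltr0n.
set M := B * n%:R `^ a.
have M0 : 0 < M by rewrite mulr_gt0 // powR_gt0.
set E := expR (- C * n%:R `^ a1).
have E0 : 0 <= E by rewrite expR_ge0.
set c := C * M `^ al * E.
have c0 : 0 <= c by rewrite mulr_ge0 // mulr_ge0 ?powR_ge0 // ltW.
pose I : interval R := `]-M, M[.
apply: (@le_trans _ _ (\int[@lebesgue_measure R]_(s in [set` I]) (cst c%:E s))%E).
  rewrite integral_mkcond [X in (_ <= X)%E]integral_mkcond.
  apply: le_integral_nm.
    by move=> s; rewrite /patch; case: ifP => // _; rewrite lee_fin.
  move=> s; rewrite /patch; case: ifPn => sD; last first.
    by case: ifP => // _; rewrite lee_fin.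
  move: sD; rewrite inE /= => /andP[s1 s2].
  have sI : (s \in [set` I])%classic.
    by rewrite inE /= /I in_itv /= -ltr_norml.
  rewrite sI /=.
  have Ks' : K < `|s| by apply: le_lt_trans s1; rewrite lerDl.
  have sge1 : 1 <= `|s| by apply: ltW; apply: le_lt_trans s1; rewrite lerDr ltW.
  have inv0 : 0 <= (`|s| `^ d1)^-1 by rewrite invr_ge0 powR_ge0.
  have inv1 : (`|s| `^ d1)^-1 <= 1.
    rewrite invf_le1; last by rewrite powR_gt0 // (lt_le_trans ltr01).
    by rewrite -(powRr0 `|s|) ler_powR.
  apply: (le_trans (lee_wpmul2r _ (H n hn0 s Ks'))); first by rewrite lee_fin.
  rewrite -EFinM lee_fin -/E.
  apply: (le_trans (y := C * `|s| `^ al * E * 1)).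
    by apply: ler_wpM2l => //; rewrite mulr_ge0 // mulr_ge0 ?powR_ge0 // ltW.
  rewrite mulr1; apply: ler_wpM2r => //; apply: ler_wpM2l; first exact: ltW.
  apply: (ge0_ler_powR (ltW al0)); rewrite ?nnegrE // ?ltW //.
rewrite integral_cst; last exact: measurable_itv.
rewrite [X in (_ * X <= _)%E](lebesgue_measure_itv I) /I /= lte_fin (_ : -M < M); last by rewrite gtrN.
rewrite -EFinD -EFinM lee_fin.
rewrite powRN.
rewrite ler_pdivlMr; last by rewrite powR_gt0.
apply: le_trans kk; rewrite le_eqVlt; apply/orP; left; apply/eqP.
have nne : n%:R != 0 :> R by rewrite gt_eqF.
rewrite powRD; last by apply/implyP => _.
rewrite powRD; last by apply/implyP => _.
rewrite /c /M powRM ?powR_ge0 ?ltW // -powRrM.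
rewrite -/E; ring.
Unshelve. all: by end_near.
Qed.
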